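(* Let $f_1,\dots,f_n$ be monotone linear functions that are not colinear. Then every locally optimal permutation for $f_1,\dots,f_n$ is counterclockwise.
   Context: A linear function is $f(x)=ax+b$; monotone means $a>0$; identical means $f(x)=x$. $\vec f=(b,1-a)^\top$ and $\theta(f)\in[0,2\pi)$ is its polar angle ($\bot$ if $\vec f=0$). For a permutation $\sigma$ of $[n]$, $f^\sigma=f_{\sigma(n)}\circ\cdots\circ f_{\sigma(1)}$; $g\le h$ for functions means pointwise. For integers $1\le\ell\le m<r\le n$, $\sigma_{\ell,m,r}$ is the permutation obtained from $\sigma$ by swapping the adjacent blocks $(\sigma(\ell),\dots,\sigma(m))$ and $(\sigma(m+1),\dots,\sigma(r))$: $\sigma_{\ell,m,r}(i)=\sigma(i)$ for $i<\ell$ or $i>r$, $\sigma_{\ell,m,r}(i)=\sigma(i-\ell+m+1)$ for $\ell\le i<\ell-m+r$, and $\sigma_{\ell,m,r}(i)=\sigma(i+m-r)$ for $\ell-m+r\le i\le r$. The neighborhood is $N(\sigma)=\{\sigma_{\ell,m,r}\mid 1\le\ell\le m<r\le n\}$, and $\sigma$ is locally optimal if $f^\sigma\le f^\mu$ for all $\mu\in N(\sigma)$. $\sigma$ is counterclockwise if, after discarding positions $i$ with $f_{\sigma(i)}$ identical, there is $k$ such that $\theta(f_{\sigma(k)})\le\cdots\le\theta(f_{\sigma(n)})\le\theta(f_{\sigma(1)})\le\cdots\le\theta(f_{\sigma(k-1)})$. $f_1,\dots,f_n$ are colinear if there is $\lambda$ with $\theta(f_i)-\lambda\in\{0,\pi\}+2\pi\mathbb{Z}$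 or $\theta(f_i)=\bot$ for all $i$. *)

(* Defs.v *)
From Stdlib Require Import Reals ZArith ClassicalEpsilon ClassicalDescription.
From mathcomp Require Import all_boot all_fingroup.

Set Implicit Arguments.
Unset Strict Implicit.
Unset Printing Implicit Defensive.

Local Open Scope R_scope.

Record linfun := LinFun { la : R; lb : R }.

Definition evalf (f : linfun) (x : R) : R := la f * x + lb f.

Definition monotone (f : linfun) : Prop := 0 < la f.

Definition identical (f : linfun) : Prop := forall x : R, evalf f x = x.

Definition identicalb (f : linfun) : bool :=
  if excluded_middle_informative (identical f) then true else false.

Definition vecf (f : linfun) : R * R := (lb f, 1 - la f).

Definition polar_angle (v : R * R) : option R :=
  let x := fst v in let y := snd v in
  if excluded_middle_informative (x = 0 /\ y = 0) then None
  else Some (epsilon (inhabits 0) (fun t =>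
          0 <= t < 2 * PI /\
          x = sqrt (x * x + y * y) * cos t /\
          y = sqrt (x * x + y * y) * sin t)).

Definition theta (f : linfun) : option R := polar_angle (vecf f).

(* f^sigma = f_{sigma(n)} o ... o f_{sigma(1)} (positions 0-based here). *)
Definition fcomp (n : nat) (fs : 'I_n -> linfun) (sigma : {perm 'I_n}) : R -> R :=
  foldl (fun g i => fun x => evalf (fs (sigma i)) (g x)) (fun x => x) (enum 'I_n).

(* The position map of sigma_{l,m,r}, on 1-based positions p:
   sigma_{l,m,r}(p) = sigma(bswap l m r p). *)
Definition bswap (l m r p : nat) : nat :=
  (if (p < l) || (r < p) then p
  else if p < l + (r - m) then p - l + m + 1
  else p + m - r)%N.

Definition is_block_swap (n : nat) (sigma mu : {perm 'I_n}) (l m r : nat) : Prop :=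
  forall i j : 'I_n, (j.+1 = bswap l m r i.+1)%N -> mu i = sigma j.

Definition in_nbhd (n : nat) (sigma mu : {perm 'I_n}) : Prop :=
  exists l m r, (1 <= l)%N /\ (l <= m)%N /\ (m < r)%N /\ (r <= n)%N /\ is_block_swap sigma mu l m r.

Definition locally_optimal (n : nat) (fs : 'I_n -> linfun) (sigma : {perm 'I_n}) : Prop :=
  forall mu : {perm 'I_n}, in_nbhd sigma mu ->
    forall x : R, fcomp fs sigma x <= fcomp fs mu x.

Definition Rleb (x y : R) : bool := if Rle_dec x y then true else false.

(* Angles theta(f_{sigma(1)}), ..., theta(f_{sigma(n)}) after discarding the
   positions where f_{sigma(i)} is identical (for these theta is never bottom). *)
Definition angle_seq (n : nat) (fs : 'I_n -> linfun) (sigma : {perm 'I_n}) : seq R :=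
  pmap (fun i => theta (fs (sigma i)))
       [seq i <- enum 'I_n | ~~ identicalb (fs (sigma i))].

Definition counterclockwise (n : nat) (fs : 'I_n -> linfun) (sigma : {perm 'I_n}) : Prop :=
  exists k : nat, sorted Rleb (rot k (angle_seq fs sigma)).

Definition colinear (n : nat) (fs : 'I_n -> linfun) : Prop :=
  exists lambda : R, forall i : 'I_n,
    theta (fs i) = None \/
    exists t, theta (fs i) = Some t /\ exists z : Z, t - lambda = IZR z * PI.

(* Main.v *)
Require Import Defs.
From Stdlib Require Import Reals Lra Lia ZArith ClassicalEpsilon Classical.
From mathcomp Require Import all_boot all_fingroup zify.
Open Scope R_scope.

Lemma polar_exists (x y : R) : ~ (x = 0 /\ y = 0) ->
  exists t, 0 <= t < 2 * PI /\ x = sqrt (x * x + y * y) * cos t /\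
            y = sqrt (x * x + y * y) * sin t.
Proof.
intros Hnz.
set r := sqrt (x * x + y * y).
assert (Hs : 0 < x * x + y * y).
{ destruct (Req_dec x 0) as [Hx|Hx].
  - assert (y <> 0) by tauto. subst x. nra.
  - nra. }
assert (Hr : 0 < r) by (apply sqrt_lt_R0; exact Hs).
assert (Hrr : r * r = x * x + y * y) by (apply sqrt_sqrt; lra).
set c := x / r.
assert (Hcr : c * r = x) by (unfold c; field; lra).
assert (Hc : -1 <= c <= 1).
{ assert (c * c <= 1).
  { apply (Rmult_le_reg_r (r * r)); [nra|].
    replace (c * c * (r * r)) with ((c * r) * (c * r)) by ring. rewrite Hcr. nra. }
  split; nra. }
assert (Hcos : cos (acos c) = c) by (apply cos_acos; exact Hc).
assert (Hsin : sin (acos c) = Rabs (y / r)).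
{ rewrite sin_acos; [|exact Hc]. rewrite <- sqrt_Rsqr_abs. f_equal.
  unfold Rsqr, c. replace (1 - x / r * (x / r)) with ((r * r - x * x) / (r * r)) by (field; lra).
  replace (r * r - x * x) with (y * y) by lra. field. lra. }
assert (Hb := acos_bound c).
assert (HPI := PI_RGT_0).
assert (Hxr : x = r * c) by (unfold c; field; lra).
destruct (Rle_dec 0 y) as [Hy|Hy].
- exists (acos c). split; [lra|]. split.
  + rewrite Hcos. exact Hxr.
  + rewrite Hsin. rewrite Rabs_right.
    * field; lra.
    * apply Rle_ge. unfold Rdiv. apply Rmult_le_pos; [lra|]. left. apply Rinv_0_lt_compat; lra.
- exists (2 * PI - acos c).
  assert (Hpos : 0 < acos c).
  { destruct (Rle_lt_or_eq_dec 0 (acos c) (proj1 Hb)) as [h|h]; [exact h|].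
    exfalso. rewrite <- h in Hsin. rewrite sin_0 in Hsin.
    assert (Rabs (y / r) <> 0).
    { apply Rabs_no_R0. intro h2. apply Hy. 
      assert (y = (y / r) * r) by (field; lra). rewrite H h2. lra. }
    lra. }
  split; [lra|]. split.
  + rewrite cos_minus cos_2PI sin_2PI Hcos. rewrite Hxr. ring.
  + rewrite sin_minus cos_2PI sin_2PI Hsin. rewrite Rabs_left.
    * field; lra.
    * assert (y / r = y * / r) by reflexivity. rewrite H.
      assert (0 < / r) by (apply Rinv_0_lt_compat; lra). nra.
Qed.

Definition th (f : linfun) : R := match theta f with Some t => t | None => 0 end.

Definition cross (p q : R * R) : R := p.1 * q.2 - p.2 * q.1.

Lemma identical_iff (f : linfun) : identical f <-> (lb f = 0 /\ 1 - la f = 0).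
Proof.
unfold identical, evalf. split.
- intro H. assert (H0 := H 0). assert (H1 := H 1). split; lra.
- intros [H1 H2] x. rewrite H1. assert (la f = 1) by lra. rewrite H. ring.
Qed.

Lemma theta_spec (f : linfun) : ~ identical f ->
  theta f = Some (th f) /\ 0 <= th f < 2 * PI /\
  exists rho, 0 < rho /\ vecf f = (rho * cos (th f), rho * sin (th f)).
Proof.
intro Hn. rewrite identical_iff in Hn.
unfold th, theta, polar_angle, vecf. simpl.
destruct (ClassicalDescription.excluded_middle_informative (lb f = 0 /\ 1 - la f = 0)) as [h|h];
  [contradiction|].
set P := (fun t => _).
assert (Hex : exists t, P t) by (apply polar_exists; exact h).
assert (Hsp := epsilon_spec (inhabits 0) P Hex).
set e := epsilon _ P in Hsp |- *.
destruct Hsp as [Ht [Hx Hy]].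
split; [reflexivity|]. split; [exact Ht|].
exists (sqrt (lb f * lb f + (1 - la f) * (1 - la f))). split.
- apply sqrt_lt_R0.
  destruct (Req_dec (lb f) 0) as [Hx0|Hx0].
  + assert (1 - la f <> 0) by tauto. nra.
  + nra.
- simpl. rewrite <- Hx, <- Hy. reflexivity.
Qed.

Lemma theta_none (f : linfun) : identical f -> theta f = None.
Proof.
intro H. rewrite identical_iff in H. unfold theta, polar_angle, vecf; simpl.
destruct (ClassicalDescription.excluded_middle_informative (lb f = 0 /\ 1 - la f = 0)); [reflexivity|contradiction].
Qed.

Lemma cross_polar r1 a r2 b :
  cross (r1 * cos a, r1 * sin a) (r2 * cos b, r2 * sin b) = r1 * r2 * sin (b - a).
Proof. unfold cross; simpl. rewrite sin_minus. ring. Qed.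

Lemma sin_period_Z (x : R) (k : Z) : sin (x + 2 * PI * IZR k) = sin x.
Proof.
destruct (Z_le_gt_dec 0 k) as [Hk|Hk].
- rewrite <- (Z2Nat.id k Hk). rewrite <- INR_IZR_INZ.
  rewrite <- (sin_period x (Z.to_nat k)). f_equal. ring.
- assert (Hk' : (0 <= - k)%Z) by lia.
  rewrite <- (sin_period (x + 2 * PI * IZR k) (Z.to_nat (- k))).
  rewrite INR_IZR_INZ Z2Nat.id; [|exact Hk']. f_equal. rewrite opp_IZR. ring.
Qed.

Lemma reduce_angle (x : R) : exists y (j : Z), 0 <= y < 2 * PI /\ y = x + 2 * PI * IZR j.
Proof.
assert (HPI := PI_RGT_0).
destruct (archimed (x / (2 * PI))) as [H1 H2].
set n := up (x / (2 * PI)) in H1, H2.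
exists (x - 2 * PI * (IZR n - 1)), (1 - n)%Z.
rewrite minus_IZR. split; [|ring].
assert (E : x / (2 * PI) * (2 * PI) = x) by (field; lra).
split; nra.
Qed.

Lemma arc (w al be ps d TH : R) (ka kb : Z) :
  0 <= d < PI -> TH < 2 * PI -> 2 * PI < d + TH ->
  al = w + d + 2 * PI * IZR ka -> be = al + TH + 2 * PI * IZR kb ->
  0 <= sin (ps - al) -> 0 <= sin (be - ps) -> sin (ps - w) < 0.
Proof.
intros Hd HT HdT Hal Hbe H1 H2.
destruct (reduce_angle (ps - al)) as [x [j [Hx Hxe]]].
assert (Hs1 : sin x = sin (ps - al)) by (rewrite Hxe; apply sin_period_Z).
assert (Hx1 : x <= PI).
{ destruct (Rle_dec x PI) as [h|h]; [exact h|].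
  assert (sin x < 0) by (apply sin_lt_0; lra). lra. }
assert (Hs2 : sin (TH - x) = sin (be - ps)).
{ replace (be - ps) with ((TH - x) + 2 * PI * IZR (kb + j)).
  - symmetry. apply sin_period_Z.
  - rewrite plus_IZR. rewrite Hbe Hxe. ring. }
assert (Hx2 : TH - PI <= x).
{ destruct (Rle_dec (TH - x) PI) as [h|h]; [lra|].
  assert (sin (TH - x) < 0) by (apply sin_lt_0; lra). lra. }
replace (ps - w) with ((x + d) + 2 * PI * IZR (ka - j)).
- rewrite sin_period_Z. apply sin_lt_0; lra.
- rewrite minus_IZR. rewrite Hxe Hal. ring.
Qed.

Definition step (x y : R) : R := if Rle_dec x y then y - x else y - x + 2 * PI.

Lemma step_eq (x y : R) : exists e : Z, step x y = y - x + 2 * PI * IZR e.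
Proof.
unfold step. destruct (Rle_dec x y).
- exists 0%Z. simpl. ring.
- exists 1%Z. simpl. ring.
Qed.

Lemma step_bounds (x y : R) : 0 <= x < 2 * PI -> 0 <= y < 2 * PI ->
  0 <= step x y < 2 * PI.
Proof. intros. unfold step. destruct (Rle_dec x y) as [h|h]; simpl; [lra|]. apply Rnot_le_lt in h. lra. Qed.

Lemma cross_step r1 a r2 b : 0 < r1 -> 0 < r2 ->
  exists c, 0 < c /\ cross (r1 * cos a, r1 * sin a) (r2 * cos b, r2 * sin b) = c * sin (step a b).
Proof.
intros H1 H2. exists (r1 * r2). split; [nra|]. rewrite cross_polar.
destruct (step_eq a b) as [e He]. rewrite He. rewrite sin_period_Z. reflexivity.
Qed.

Definition applyL (s : seq linfun) (y : R) : R := foldl (fun y f => evalf f y) y s.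
Definition slope (s : seq linfun) : R := applyL s 1 - applyL s 0.
Definition icpt (s : seq linfun) : R := applyL s 0.
Definition vv (s : seq linfun) : R * R := (icpt s, 1 - slope s).

Lemma applyL_cons f s y : applyL (f :: s) y = applyL s (evalf f y).
Proof. reflexivity. Qed.

Lemma applyL_affine s y : applyL s y = slope s * y + icpt s.
Proof.
unfold slope, icpt. elim: s y => [|f s IH] y.
- rewrite /applyL /=. ring.
- rewrite !applyL_cons. rewrite (IH (evalf f y)) (IH (evalf f 1)) (IH (evalf f 0)).
  unfold evalf. ring.
Qed.

Lemma slope_cons f s : slope (f :: s) = slope s * la f.
Proof.
unfold slope at 1. rewrite !applyL_cons !(applyL_affine s). unfold evalf. ring.
Qed.

Lemma icpt_cons f s : icpt (f :: s) = slope s * lb f + icpt s.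
Proof.
unfold icpt at 1. rewrite !applyL_cons !(applyL_affine s). unfold evalf. ring.
Qed.

Lemma applyL_rcons s f y : applyL (rcons s f) y = evalf f (applyL s y).
Proof. unfold applyL. by rewrite foldl_rcons. Qed.

Lemma slope_rcons s f : slope (rcons s f) = la f * slope s.
Proof. unfold slope. rewrite !applyL_rcons. unfold evalf. ring. Qed.

Lemma icpt_rcons s f : icpt (rcons s f) = la f * icpt s + lb f.
Proof. unfold icpt. rewrite !applyL_rcons. unfold evalf. ring. Qed.

Lemma applyL_cat s1 s2 y : applyL (s1 ++ s2) y = applyL s2 (applyL s1 y).
Proof. unfold applyL. by rewrite foldl_cat. Qed.

Lemma slope_nil : slope [::] = 1.
Proof. rewrite /slope /applyL /=. ring. Qed.
Lemma icpt_nil : icpt [::] = 0.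
Proof. reflexivity. Qed.

Lemma slope_pos s : (forall f, List.In f s -> 0 < la f) -> 0 < slope s.
Proof.
elim: s => [|f s IH] H.
- rewrite slope_nil. lra.
- rewrite slope_cons. apply Rmult_lt_0_compat.
  + apply IH. intros g Hg. apply H. by right.
  + apply H. by left.
Qed.

Lemma vv_rcons s f : vv (rcons s f) =
  (la f * (vv s).1 + (vecf f).1, la f * (vv s).2 + (vecf f).2).
Proof. rewrite /vv /vecf /= slope_rcons icpt_rcons. f_equal; ring. Qed.

Lemma vv_cons f s : vv (f :: s) =
  (slope s * (vecf f).1 + (vv s).1, slope s * (vecf f).2 + (vv s).2).
Proof. rewrite /vv /vecf /= slope_cons icpt_cons. f_equal; ring. Qed.

Lemma vv_nil : vv [::] = (0, 0).
Proof. rewrite /vv slope_nil icpt_nil. f_equal; ring. Qed.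

Lemma vv_single f : vv [:: f] = vecf f.
Proof. rewrite vv_cons vv_nil slope_nil /vecf /=. f_equal; ring. Qed.

Definition nonid (f : linfun) : bool := ~~ identicalb f.

Lemma identicalbP f : identicalb f = true <-> identical f.
Proof.
unfold identicalb. destruct (ClassicalDescription.excluded_middle_informative (identical f)); simpl;
split; intros; try tauto; discriminate.
Qed.

Lemma applyL_filter s y : applyL (filter nonid s) y = applyL s y.
Proof.
elim: s y => [|f s IH] y; [reflexivity|].
rewrite applyL_cons. simpl filter. unfold nonid. case Hf: (identicalb f); simpl negb; cbv iota.
- rewrite IH. apply identicalbP in Hf. by rewrite Hf.
- rewrite applyL_cons IH. reflexivity.
Qed.

Lemma vv_filter s : vv (filter nonid s) = vv s.
Proof. by rewrite /vv /slope /icpt !applyL_filter. Qed.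

Definition Good_list (s : seq linfun) : Prop :=
  forall P X Y S, s = P ++ X ++ Y ++ S -> X <> [::] -> Y <> [::] ->
    0 <= cross (vv X) (vv Y).

Lemma filter_split (T : Type) (p : pred T) (s A' B' : seq T) :
  filter p s = A' ++ B' -> exists A B, s = A ++ B /\ filter p A = A' /\ filter p B = B'.
Proof.
elim: s A' => [|x s IH] A' /=.
- intro H. exists [::], [::]. destruct A' as [|a A']; [|discriminate].
  simpl in H. by subst.
- case Hx: (p x) => H.
  + destruct A' as [|a A'].
    * exists [::], (x :: s). simpl in H. split; [done|]. split; [done|].
      by rewrite /= Hx.
    * simpl in H. case: H => Ha H. subst a.
      destruct (IH A' H) as [A [B [H1 [H2 H3]]]].
      exists (x :: A), B. rewrite H1 /= Hx H2. by split.
  + destruct (IH A' H) as [A [B [H1 [H2 H3]]]].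
    exists (x :: A), B. rewrite H1 /= Hx H2. by split.
Qed.

Arguments filter_split {T p s A' B'}.

Lemma Good_filter s : Good_list s -> Good_list (filter nonid s).
Proof.
intros HG P' X' Y' S' Hs HX HY.
destruct (filter_split Hs) as [P [R1 [E1 [HP HR1]]]].
destruct (filter_split HR1) as [X [R2 [E2 [HX' HR2]]]].
destruct (filter_split HR2) as [Y [S [E3 [HY' HS]]]].
rewrite -HX' -HY' !vv_filter.
apply (HG P X Y S).
- by rewrite E1 E2 E3.
- intro h. apply HX. by rewrite -HX' h.
- intro h. apply HY. by rewrite -HY' h.
Qed.

Lemma swap_cross P X Y S : (forall f, List.In f S -> 0 < la f) ->
  icpt (P ++ X ++ Y ++ S) <= icpt (P ++ Y ++ X ++ S) -> 0 <= cross (vv X) (vv Y).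
Proof.
intros HS H. unfold icpt in H. rewrite !applyL_cat in H.
rewrite !(applyL_affine S) !(applyL_affine Y) !(applyL_affine X) in H.
have Hs := slope_pos S HS.
unfold cross, vv; simpl.
set sS := slope S in H Hs. set bP := applyL P 0 in H.
nra.
Qed.

Lemma foldl_applyL {n : nat} (G : 'I_n -> linfun) (e : seq 'I_n) (g0 : R -> R) (x : R) :
  foldl (fun g i => fun x => evalf (G i) (g x)) g0 e x = applyL (map G e) (g0 x).
Proof. elim: e g0 => [|i e IH] g0 //=. Qed.

Lemma fcomp_applyL (n : nat) (fs : 'I_n -> linfun) (sigma : {perm 'I_n}) x :
  fcomp fs sigma x = applyL (map (fun i => fs (sigma i)) (enum 'I_n)) x.
Proof. unfold fcomp. exact (foldl_applyL (fun i => fs (sigma i)) _ _ x). Qed.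

Definition bpos (l m r p : nat) : nat := (bswap l m r p.+1).-1.

Lemma bpos_spec l m r p : (1 <= l)%N -> (l <= m)%N -> (m < r)%N ->
  (bswap l m r p.+1 = (bpos l m r p).+1)%N.
Proof. rewrite /bpos /bswap => H1 H2 H3. repeat (case: ifP => ?); lia. Qed.

Lemma bpos_lt l m r n p : (1 <= l)%N -> (l <= m)%N -> (m < r)%N -> (r <= n)%N ->
  (p < n)%N -> (bpos l m r p < n)%N.
Proof. rewrite /bpos /bswap => H1 H2 H3 H4 H5. repeat (case: ifP => ?); lia. Qed.

Lemma bpos_inj l m r p q : (1 <= l)%N -> (l <= m)%N -> (m < r)%N ->
  bpos l m r p = bpos l m r q -> p = q.
Proof.
rewrite /bpos /bswap => H1 H2 H3.
repeat (case: ifP => ?); lia.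
Qed.

Lemma map_iota_shift (f : nat -> nat) a b len :
  (forall i, (i < len)%N -> f (a + i)%N = (b + i)%N) -> map f (iota a len) = iota b len.
Proof.
elim: len a b => [|len IH] a b H //=.
have h0 := H 0%N isT. rewrite !addn0 in h0. rewrite h0. f_equal.
apply IH => i Hi. have := H i.+1 Hi. by rewrite !addnS !addSn.
Qed.

Lemma map_nth_piece (T : Type) (d : T) (A B C : seq T) :
  map (nth d (A ++ B ++ C)) (iota (size A) (size B)) = B.
Proof.
elim: B A => [|b B IH] A //=.
rewrite nth_cat ltnn subnn /=. f_equal.
have := IH (rcons A b). rewrite size_rcons -cats1 -catA /=. by [].
Qed.

Lemma map_bpos P X Y S :
  (0 < P.+1)%N -> (0 < X)%N -> (0 < Y)%N ->
  map (bpos P.+1 (P + X) (P + X + Y)) (iota 0 (P + X + Y + S)) =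
  iota 0 P ++ iota (P + X) Y ++ iota P X ++ iota (P + X + Y) S.
Proof.
move=> _ HX HY.
have -> : (P + X + Y + S = P + (Y + (X + S)))%N by lia.
rewrite !iotaD !map_cat.
have e1 : (0 + P = P)%N by lia. rewrite e1.
f_equal; [|f_equal; [|f_equal]].
- apply map_iota_shift => i Hi. rewrite /bpos /bswap. repeat (case: ifP => ?); lia.
- apply map_iota_shift => i Hi. rewrite /bpos /bswap. repeat (case: ifP => ?); lia.
- apply map_iota_shift => i Hi. rewrite /bpos /bswap. repeat (case: ifP => ?); lia.
- have -> : (P + Y + X = P + X + Y)%N by lia. apply map_iota_shift => i Hi. rewrite /bpos /bswap. repeat (case: ifP => ?); lia.
Qed.

Definition d0 : linfun := LinFun 1 0.
Arguments bpos_lt {l m r n p}.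
Arguments bpos_inj {l m r p q}.
Arguments bpos_spec {l m r} p.
Arguments map_nth_piece {T}.

Lemma In_map_ex (A B : Type) (F : A -> B) (e : seq A) (y : B) :
  List.In y (map F e) -> exists x, y = F x.
Proof.
elim: e => [|a e IH] //= [h|h].
- by exists a.
- by apply IH.
Qed.

Arguments In_map_ex {A B F e y}.

Lemma lo_good (n : nat) (fs : 'I_n -> linfun) (sigma : {perm 'I_n}) :
  (forall i, monotone (fs i)) -> locally_optimal fs sigma ->
  Good_list (map (fun i => fs (sigma i)) (enum 'I_n)).
Proof.
move=> Hmon Hlo P X Y S HL HX HY.
set L := map (fun i => fs (sigma i)) (enum 'I_n) in HL.
have Hsz : size L = n by rewrite size_map size_enum_ord.
have Hn : n = (size P + size X + size Y + size S)%N.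
{ rewrite -Hsz HL !size_cat. lia. }
have Hx : (0 < size X)%N by case: X HX HL {Hn} => [|? ?].
have Hy : (0 < size Y)%N by case: Y HY HL {Hn} => [|? ?].
set p := size P in Hn. set x := size X in Hn Hx. set y := size Y in Hn Hy.
set z := size S in Hn.
set l := p.+1. set m := (p + x)%N. set r := (p + x + y)%N.
have H1 : (1 <= l)%N by rewrite /l.
have H2 : (l <= m)%N by rewrite /l /m; lia.
have H3 : (m < r)%N by rewrite /m /r; lia.
have H4 : (r <= n)%N by rewrite /r Hn; lia.
pose beta := fun i : 'I_n => Ordinal (bpos_lt H1 H2 H3 H4 (ltn_ord i)).
have beta_inj : injective beta.
{ move=> i j /(congr1 val) /= h. apply val_inj. exact: (bpos_inj H1 H2 H3 h). }
have mu_inj : injective (fun i => sigma (beta i)).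
{ move=> i j /perm_inj h. by apply beta_inj. }
pose mu := perm mu_inj.
have Hnb : in_nbhd sigma mu.
{ exists l, m, r. do 4 (split; [done|]).
  move=> i j hj. rewrite /mu permE. f_equal. apply val_inj => /=.
  rewrite (bpos_spec i H1 H2 H3) in hj. by case: hj. }
have Hle := Hlo mu Hnb 0.
rewrite !fcomp_applyL in Hle.
have Emu : map (fun i => fs (mu i)) (enum 'I_n) = P ++ Y ++ X ++ S.
{ have E1 : map (fun i => fs (mu i)) (enum 'I_n) =
            map (fun k => nth d0 L (bpos l m r k)) (iota 0 n).
  { rewrite -val_enum_ord -map_comp. apply eq_in_map => i _ /=.
    rewrite /mu permE /L.
    have hb : (bpos l m r i < size (enum 'I_n))%N by rewrite size_enum_ord; exact: (bpos_lt H1 H2 H3 H4 (ltn_ord i)).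
    rewrite (nth_map i _ _ hb). f_equal. f_equal. apply val_inj => /=.
    rewrite nth_enum_ord //. exact: (bpos_lt H1 H2 H3 H4 (ltn_ord i)). }
  rewrite E1. rewrite (@map_comp _ _ _ (nth d0 L) (bpos l m r)).
  rewrite Hn /l /m /r. rewrite map_bpos //. rewrite !map_cat.
  have e1 : map (nth d0 L) (iota 0 p) = P.
  { by rewrite HL (map_nth_piece d0 [::] P (X ++ Y ++ S)). }
  have e2 : map (nth d0 L) (iota (p + x) y) = Y.
  { have -> : L = (P ++ X) ++ Y ++ S by rewrite HL catA.
    have -> : (p + x)%N = size (P ++ X) by rewrite size_cat.
    exact: map_nth_piece. }
  have e3 : map (nth d0 L) (iota p x) = X.
  { rewrite HL. exact: map_nth_piece. }
  have e4 : map (nth d0 L) (iota (p + x + y) z) = S.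
  { have -> : L = (P ++ X ++ Y) ++ S ++ [::] by rewrite HL cats0 !catA.
    have -> : (p + x + y)%N = size (P ++ X ++ Y) by rewrite !size_cat; lia.
    exact: map_nth_piece. }
  by rewrite e1 e2 e3 e4. }
rewrite Emu -/L HL in Hle.
apply: (swap_cross P X Y S).
- move=> f Hf. have : List.In f L.
  { rewrite HL. apply List.in_or_app. right. apply List.in_or_app. right.
    apply List.in_or_app. by right. }
  move=> /In_map_ex [i ->]. apply Hmon.
- exact Hle.
Qed.

Definition vlin (c : R) (p q : R * R) : R * R := (c * p.1 + q.1, c * p.2 + q.2).

Lemma cross_vlin_l c p q w : cross (vlin c p q) w = c * cross p w + cross q w.
Proof. rewrite /cross /vlin /=. ring. Qed.
Lemma cross_vlin_r c p q w : cross w (vlin c p q) = c * cross w p + cross w q.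
Proof. rewrite /cross /vlin /=. ring. Qed.
Lemma cross_anti p q : cross p q = - cross q p.
Proof. rewrite /cross. ring. Qed.
Lemma cross_self p : cross p p = 0.
Proof. rewrite /cross. ring. Qed.

Definition win (s : seq linfun) (l r : nat) := take (r - l) (drop l s).
Definition Vw s l r := vv (win s l r).
Definition uu s t := vecf (nth d0 s t).
Definition aa s t := la (nth d0 s t).
Definition thv s t := th (nth d0 s t).

Lemma Vw_nil s l : Vw s l l = (0, 0).
Proof. by rewrite /Vw /win subnn take0 vv_nil. Qed.

Lemma Vw_rcons s l r : (l <= r)%N -> (r < size s)%N ->
  Vw s l r.+1 = vlin (aa s r) (Vw s l r) (uu s r).
Proof.
move=> H1 H2. rewrite /Vw /win.
have -> : (r.+1 - l = (r - l).+1)%N by lia.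
rewrite (take_nth d0); last by rewrite size_drop; lia.
rewrite nth_drop. have -> : (l + (r - l) = r)%N by lia.
by rewrite vv_rcons.
Qed.

Lemma In_take (T : Type) (x : T) n s : List.In x (take n s) -> List.In x s.
Proof.
elim: s n => [|a s IH] [|n] //= [h|h]; [by left|right; exact: IH h].
Qed.

Lemma In_drop (T : Type) (x : T) n s : List.In x (drop n s) -> List.In x s.
Proof.
elim: s n => [|a s IH] [|n] //= h. right; exact: IH h.
Qed.

Definition allpos (s : seq linfun) := forall f, List.In f s -> 0 < la f.

Lemma Vw_cons s l r : allpos s -> (l < r)%N -> (r <= size s)%N ->
  exists A, 0 < A /\ Vw s l r = vlin A (uu s l) (Vw s l.+1 r).
Proof.
move=> Hp H1 H2. rewrite /Vw /win.
rewrite (drop_nth d0); last by lia.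
have -> : (r - l = (r - l.+1).+1)%N by lia.
rewrite /= vv_cons. exists (slope (take (r - l.+1) (drop l.+1 s))). split; last by [].
apply slope_pos => f Hf. apply Hp. exact: (In_drop _ _ _ _ (In_take _ _ _ _ Hf)).
Qed.

Lemma Vw_single s l : (l < size s)%N -> Vw s l l.+1 = uu s l.
Proof.
move=> H. rewrite Vw_rcons //. rewrite Vw_nil /vlin /uu /vecf /=. f_equal; ring.
Qed.

Lemma win_split s l m r : (l <= m)%N -> (m <= r)%N -> (r <= size s)%N ->
  s = take l s ++ win s l m ++ win s m r ++ drop r s.
Proof.
move=> H1 H2 H3. rewrite /win.
rewrite -{1}(cat_take_drop l s). f_equal.
rewrite -{1}(cat_take_drop (m - l) (drop l s)). f_equal.
rewrite drop_drop. have -> : (m - l + l = m)%N by lia.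
rewrite -{1}(cat_take_drop (r - m) (drop m s)). f_equal.
rewrite drop_drop. f_equal. lia.
Qed.

Lemma win_nonempty s l r : (l < r)%N -> (r <= size s)%N -> win s l r <> [::].
Proof.
move=> H1 H2 h. have := congr1 size h. rewrite /win size_take size_drop /=.
case: ifP; lia.
Qed.

Lemma GoodI s l m r : Good_list s -> (l < m)%N -> (m < r)%N -> (r <= size s)%N ->
  0 <= cross (Vw s l m) (Vw s m r).
Proof.
move=> HG H1 H2 H3. apply: (HG (take l s)).
- apply win_split; lia.
- apply win_nonempty; lia.
- apply win_nonempty; lia.
Qed.

Arguments GoodI {s l m r}.
Arguments Vw_single {s l}.
Arguments Vw_rcons {s l r}.
Arguments Vw_cons {s l r}.

Definition vsc (c : R) (p : R * R) : R * R := (c * p.1, c * p.2).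
Lemma cross_vsc_l c p q : cross (vsc c p) q = c * cross p q.
Proof. rewrite /cross /vsc /=. ring. Qed.
Lemma cross_vsc_r c p q : cross p (vsc c q) = c * cross p q.
Proof. rewrite /cross /vsc /=. ring. Qed.

Definition nz (p : R * R) := ~ (p.1 = 0 /\ p.2 = 0).

Lemma cross_par e p q : nz e -> cross e p = 0 -> cross e q = 0 -> cross p q = 0.
Proof.
rewrite /nz /cross. case: e => e1 e2; case: p => p1 p2; case: q => q1 q2 /= He H1 H2.
have A1 : e1 * (p1 * q2 - p2 * q1) = 0.
{ replace (e1 * (p1 * q2 - p2 * q1)) with (p1 * (e1 * q2 - e2 * q1) - q1 * (e1 * p2 - e2 * p1)) by ring.
  rewrite H1 H2. ring. }
have A2 : e2 * (p1 * q2 - p2 * q1) = 0.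
{ replace (e2 * (p1 * q2 - p2 * q1)) with (p2 * (e1 * q2 - e2 * q1) - q2 * (e1 * p2 - e2 * p1)) by ring.
  rewrite H1 H2. ring. }
destruct (Req_dec e1 0) as [h1|h1].
- destruct (Req_dec e2 0) as [h2|h2]; [tauto|].
  apply (Rmult_eq_reg_l e2); [lra|exact h2].
- apply (Rmult_eq_reg_l e1); [lra|exact h1].
Qed.

Definition Hyps (s : seq linfun) : Prop :=
  Good_list s /\ allpos s /\ (forall t, (t < size s)%N -> ~ identical (nth d0 s t)).

Lemma uu_nz s t : Hyps s -> (t < size s)%N -> nz (uu s t).
Proof.
move=> [_ [_ Hn]] Ht. have := Hn t Ht. rewrite identical_iff /nz /uu /vecf /=. tauto.
Qed.

Lemma uu_polar s t : Hyps s -> (t < size s)%N ->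
  0 <= thv s t < 2 * PI /\ exists rho, 0 < rho /\ uu s t = (rho * cos (thv s t), rho * sin (thv s t)).
Proof.
move=> [_ [_ Hn]] Ht. have [_ [H1 H2]] := theta_spec _ (Hn t Ht). split; [exact H1|exact H2].
Qed.

Lemma aa_pos s t : Hyps s -> (t < size s)%N -> 0 < aa s t.
Proof.
move=> [_ [Hp _]] Ht. apply Hp. rewrite /aa.
elim: s t Ht {Hp} => [|f s IH] [|t] //= Ht; [by left|right; apply IH; exact Ht].
Qed.

Lemma wpar s e x y : Hyps s -> (forall i, (x <= i < y)%N -> cross e (uu s i) = 0) ->
  (x <= y)%N -> (y <= size s)%N -> cross e (Vw s x y) = 0.
Proof.
move=> HH. elim: y => [|y IH] H Hxy Hy.
- have -> : x = 0%N by lia. rewrite Vw_nil /cross /=. ring.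
- case: (leqP x y) => h.
  + rewrite Vw_rcons; [|exact h|lia]. rewrite cross_vlin_r IH; [|move=> i Hi; apply H; lia|exact h|lia].
    rewrite H; [ring|lia].
  + have -> : x = y.+1 by lia. rewrite Vw_nil /cross /=. ring.
Qed.

Arguments wpar {s e x y}.

Lemma parallel_all s t c : Hyps s -> (t.+1 < size s)%N -> 0 < c ->
  uu s t.+1 = vsc (- c) (uu s t) ->
  forall i, (i < size s)%N -> cross (uu s t) (uu s i) = 0.
Proof.
move=> HH Ht Hc Hanti.
have HG : Good_list s by case: HH.
set e := uu s t.
have Hen : nz e by apply: (uu_nz s t HH); lia.
have Fw : forall d i, (t <= i <= t.+1 + d)%N -> (i < size s)%N -> cross e (uu s i) = 0.
{ elim=> [|d IH] i Hi Hk.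
  - have : (i == t) || (i == t.+1) by lia. case/orP.
    + move/eqP=> ->. apply cross_self.
    + move/eqP=> ->. rewrite Hanti cross_vsc_r cross_self. ring.
  - case: (leqP i (t.+1 + d)) => hi; first by apply IH; lia.
    have Ei : i = (t.+1 + d).+1 by lia.
    set sx := (t.+1 + d)%N in Ei. subst i.
    set X := cross e (uu s sx.+1).
    have Ha : 0 <= X.
    { have G1 := @GoodI s t t.+1 sx.+2 HG ltac:(lia) ltac:(lia) ltac:(lia).
      rewrite (@Vw_single s t) in G1; [|lia].
      rewrite (@Vw_rcons s t.+1 sx.+1) in G1; [|lia|lia]. rewrite cross_vlin_r in G1.
      rewrite (@wpar s e t.+1 sx.+1 HH) in G1; [|move=> j Hj; apply IH; lia|lia|lia].
      move: G1. rewrite /X /e. lra. }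
    have Hb : 0 <= - c * X.
    { have G1 := @GoodI s t.+1 t.+2 sx.+2 HG ltac:(lia) ltac:(lia) ltac:(lia).
      rewrite (@Vw_single s t.+1) in G1; [|lia].
      rewrite (@Vw_rcons s t.+2 sx.+1) in G1; [|lia|lia]. rewrite cross_vlin_r in G1.
      rewrite Hanti -/e !cross_vsc_l in G1.
      rewrite (@wpar s e t.+2 sx.+1 HH) in G1; [|move=> j Hj; apply IH; lia|lia|lia].
      move: G1. rewrite /X /e. lra. }
    move: Ha Hb. rewrite /X /e. nra. }
have Fw' : forall i, (t <= i)%N -> (i < size s)%N -> cross e (uu s i) = 0.
{ move=> i H1 H2. apply (Fw i); lia. }
have Bw : forall d i, (t - d <= i)%N -> (i < size s)%N -> cross e (uu s i) = 0.
{ elim=> [|d IH] i Hi Hk; first by apply Fw'; lia.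
  case: (leqP (t - d) i) => hi; first by apply IH.
  have Ht' : (i < t)%N by lia.
  set Y := cross (uu s i) e.
  have Ha : 0 <= Y.
  { have G1 := @GoodI s i t t.+1 HG ltac:(lia) ltac:(lia) ltac:(lia).
    rewrite (@Vw_single s t) in G1; [|lia].
    have [A [HA E]] := @Vw_cons s i t (proj1 (proj2 HH)) ltac:(lia) ltac:(lia).
    rewrite E cross_vlin_l -/e in G1.
    have h0 : cross (Vw s i.+1 t) e = 0.
    { rewrite cross_anti (@wpar s e i.+1 t HH); [ring| |lia|lia].
      move=> j Hj; apply IH; lia. }
    rewrite h0 in G1. rewrite /Y. nra. }
  have Hb : 0 <= - c * Y.
  { have G1 := @GoodI s i t.+1 t.+2 HG ltac:(lia) ltac:(lia) ltac:(lia).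
    rewrite (@Vw_single s t.+1) in G1; [|lia].
    have [A [HA E]] := @Vw_cons s i t.+1 (proj1 (proj2 HH)) ltac:(lia) ltac:(lia).
    rewrite E cross_vlin_l Hanti -/e !cross_vsc_r in G1.
    have h0 : cross (Vw s i.+1 t.+1) e = 0.
    { rewrite cross_anti (@wpar s e i.+1 t.+1 HH); [ring| |lia|lia].
      move=> j Hj; apply IH; lia. }
    rewrite h0 in G1. rewrite /Y. nra. }
  have : Y = 0 by nra. rewrite /Y cross_anti. lra. }
move=> i Hi. apply (Bw t); lia.
Qed.

Set Implicit Arguments.
Unset Strict Implicit.

Arguments uu_polar {s t}.
Arguments uu_nz {s t}.
Arguments aa_pos {s t}.
Arguments parallel_all {s t c}.

Definition dl s t := step (thv s t) (thv s t.+1).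

Fixpoint Tn s l len := match len with 0 => 0 | S n => dl s l + Tn s l.+1 n end.

Lemma Tn_r s l n : Tn s l n.+1 = Tn s l n + dl s (l + n)%N.
Proof.
elim: n l => [|n IH] l.
- simpl. rewrite addn0. ring.
- change (Tn s l n.+2) with (dl s l + Tn s l.+1 n.+1). rewrite IH.
  change (Tn s l n.+1) with (dl s l + Tn s l.+1 n). rewrite addnS -addSn. ring.
Qed.

Lemma Tn_eq s l n : exists W : Z, Tn s l n = thv s (l + n)%N - thv s l + 2 * PI * IZR W.
Proof.
elim: n l => [|n IH] l /=.
- exists 0%Z. rewrite addn0. simpl. ring.
- have [W HW] := IH l.+1. have [e He] := step_eq (thv s l) (thv s l.+1).
  exists (e + W)%Z. rewrite /dl He HW plus_IZR addSnnS. ring.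
Qed.

Lemma dl_bounds s t : Hyps s -> (t.+1 < size s)%N -> 0 <= dl s t < 2 * PI.
Proof.
move=> HH Ht. have [h1 _] := uu_polar HH (ltnW Ht). have [h2 _] := uu_polar HH Ht.
exact: step_bounds.
Qed.

Lemma cross_dl s t : Hyps s -> (t.+1 < size s)%N ->
  exists c, 0 < c /\ cross (uu s t) (uu s t.+1) = c * sin (dl s t).
Proof.
move=> HH Ht. have [_ [r1 [h1 E1]]] := uu_polar HH (ltnW Ht).
have [_ [r2 [h2 E2]]] := uu_polar HH Ht.
rewrite E1 E2. exact: cross_step.
Qed.

Lemma adj_nonneg s t : Hyps s -> (t.+1 < size s)%N -> 0 <= cross (uu s t) (uu s t.+1).
Proof.
move=> HH Ht. have HG : Good_list s by case: HH.
have G1 := @GoodI s t t.+1 t.+2 HG ltac:(lia) ltac:(lia) ltac:(lia).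
by rewrite (@Vw_single s t) ?(@Vw_single s t.+1) in G1; try lia.
Qed.

Lemma dl_le_pi s t : Hyps s -> (t.+1 < size s)%N -> dl s t <= PI.
Proof.
move=> HH Ht. have [c [hc E]] := cross_dl HH Ht.
have A := adj_nonneg HH Ht. rewrite E in A.
have B := dl_bounds HH Ht.
destruct (Rle_dec (dl s t) PI) as [h|h]; [exact h|].
have : sin (dl s t) < 0 by apply sin_lt_0; lra.
nra.
Qed.

Lemma dl_pi_anti s t : Hyps s -> (t.+1 < size s)%N -> dl s t = PI ->
  exists c, 0 < c /\ uu s t.+1 = vsc (- c) (uu s t).
Proof.
move=> HH Ht Hd. have [_ [r1 [h1 E1]]] := uu_polar HH (ltnW Ht).
have [_ [r2 [h2 E2]]] := uu_polar HH Ht.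
move: Hd. rewrite /dl /step. set a := thv s t. set b := thv s t.+1. move=> Hd.
have [Hc Hs] : cos b = - cos a /\ sin b = - sin a.
{ move: Hd. case: (Rle_dec a b) => h /= Hd.
  - have -> : b = a + PI by lra. by rewrite neg_cos neg_sin.
  - have Ea : a = b + PI by lra. rewrite Ea neg_cos neg_sin. split; ring. }
exists (r2 / r1). split.
- apply Rdiv_lt_0_compat; lra.
- rewrite E1 E2 /vsc /= -/a -/b Hc Hs. f_equal; field; lra.
Qed.

Lemma dl_lt_pi s t : Hyps s ->
  (exists i j, (i < size s)%N /\ (j < size s)%N /\ cross (uu s i) (uu s j) <> 0) ->
  (t.+1 < size s)%N -> dl s t < PI.
Proof.
move=> HH [i [j [Hi [Hj Hij]]]] Ht.
have := dl_le_pi HH Ht. case=> h; [exact h|exfalso].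
have [c [hc E]] := dl_pi_anti HH Ht h.
have P := parallel_all HH Ht hc E.
apply Hij. apply: (cross_par _ _ _ (uu_nz HH (ltnW Ht))); by apply P.
Qed.

Lemma dl_zero s t : Hyps s -> (t.+1 < size s)%N -> dl s t < PI ->
  cross (uu s t) (uu s t.+1) <= 0 -> dl s t = 0.
Proof.
move=> HH Ht Hlt Hc. have [c [hc E]] := cross_dl HH Ht. rewrite E in Hc.
have B := dl_bounds HH Ht.
destruct (Rle_lt_or_eq_dec 0 (dl s t) (proj1 B)) as [h|h]; [|by rewrite h].
have : 0 < sin (dl s t) by apply sin_gt_0.
nra.
Qed.

Lemma dl_pos_cross s t : Hyps s -> (t.+1 < size s)%N -> 0 < dl s t < PI ->
  0 < cross (uu s t) (uu s t.+1).
Proof.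
move=> HH Ht [h1 h2]. have [c [hc E]] := cross_dl HH Ht. rewrite E.
have : 0 < sin (dl s t) by apply sin_gt_0.
nra.
Qed.

Lemma alg_Z (u v W : R * R) A a : 0 < A -> 0 < a -> vlin A v W = (0, 0) ->
  0 <= cross (vlin a u v) W -> cross u v <= 0.
Proof.
case: u => u1 u2; case: v => v1 v2; case: W => w1 w2.
rewrite /vlin /cross /= => hA ha [e1 e2] H.
have E1 : w1 = - A * v1 by lra. have E2 : w2 = - A * v2 by lra.
rewrite E1 E2 in H.
replace ((a * u1 + v1) * (- A * v2) - (a * u2 + v2) * (- A * v1)) with
  (- (A * a) * (u1 * v2 - u2 * v1)) in H by ring.
have hAa : 0 < A * a by apply Rmult_lt_0_compat.
destruct (Rle_dec (u1 * v2 - u2 * v1) 0) as [h|h]; [exact h|].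
have : 0 < (A * a) * (u1 * v2 - u2 * v1) by apply Rmult_lt_0_compat; lra.
lra.
Qed.

Lemma alg_Z' (u v W : R * R) a a' : 0 < a -> vlin a W u = (0, 0) ->
  0 <= cross W (vlin a' u v) -> cross u v <= 0.
Proof.
case: u => u1 u2; case: v => v1 v2; case: W => w1 w2.
rewrite /vlin /cross /= => ha [e1 e2] H.
have H' : 0 <= a * (w1 * (a' * u2 + v2) - w2 * (a' * u1 + v1)) by apply Rmult_le_pos; lra.
have E1 : a * w1 = - u1 by lra. have E2 : a * w2 = - u2 by lra.
replace (a * (w1 * (a' * u2 + v2) - w2 * (a' * u1 + v1))) with
  ((a * w1) * (a' * u2 + v2) - (a * w2) * (a' * u1 + v1)) in H' by ring.
rewrite E1 E2 in H'.
replace (- u1 * (a' * u2 + v2) - - u2 * (a' * u1 + v1)) with (- (u1 * v2 - u2 * v1)) in H' by ring.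
lra.
Qed.

Lemma zero_of_two (p q w : R * R) : cross p q <> 0 -> cross p w = 0 -> cross q w = 0 ->
  w = (0, 0).
Proof.
case: p => p1 p2; case: q => q1 q2; case: w => w1 w2.
rewrite /cross /= => H h1 h2.
have A1 : (p1 * q2 - p2 * q1) * w1 = 0.
{ replace ((p1 * q2 - p2 * q1) * w1) with (q1 * (p1 * w2 - p2 * w1) - p1 * (q1 * w2 - q2 * w1)) by ring.
  rewrite h1 h2. ring. }
have A2 : (p1 * q2 - p2 * q1) * w2 = 0.
{ replace ((p1 * q2 - p2 * q1) * w2) with (q2 * (p1 * w2 - p2 * w1) - p2 * (q1 * w2 - q2 * w1)) by ring.
  rewrite h1 h2. ring. }
f_equal.
- apply (Rmult_eq_reg_l (p1 * q2 - p2 * q1)); [lra|exact H].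
- apply (Rmult_eq_reg_l (p1 * q2 - p2 * q1)); [lra|exact H].
Qed.

Lemma LZ s p q : Hyps s -> (p.+1 < q)%N -> (q <= size s)%N -> Vw s p.+1 q = (0, 0) ->
  cross (uu s p) (uu s p.+1) <= 0.
Proof.
move=> HH H1 H2 H0. have HG : Good_list s by case: HH.
case: (ltngtP q p.+2) => hq; [lia| |].
- have [A [hA E]] := @Vw_cons s p.+1 q (proj1 (proj2 HH)) ltac:(lia) H2.
  rewrite E in H0.
  have G1 := @GoodI s p p.+2 q HG ltac:(lia) hq H2.
  rewrite (@Vw_rcons s p p.+1) in G1; [|lia|lia]. rewrite (@Vw_single s p) in G1; [|lia].
  have [A' [hA' E']] := @Vw_cons s p.+1 q (proj1 (proj2 HH)) ltac:(lia) H2.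
  apply: (alg_Z hA (aa_pos HH (_ : (p.+1 < size s)%N)) H0 G1). lia.
- exfalso. subst q. rewrite (@Vw_single s p.+1) in H0; [|lia].
  apply: (uu_nz HH (_ : (p.+1 < size s)%N)); [lia|]. by rewrite H0.
Qed.

Lemma LZ' s p q : Hyps s -> (p <= q)%N -> (q.+2 <= size s)%N -> Vw s p q.+1 = (0, 0) ->
  cross (uu s q) (uu s q.+1) <= 0.
Proof.
move=> HH H1 H2 H0. have HG : Good_list s by case: HH.
case: (ltngtP p q) => hq; [| lia |].
- rewrite (@Vw_rcons s p q) in H0; [|lia|lia].
  have G1 := @GoodI s p q q.+2 HG hq ltac:(lia) H2.
  rewrite (@Vw_rcons s q q.+1) in G1; [|lia|lia]. rewrite (@Vw_single s q) in G1; [|lia].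
  apply: (alg_Z' (aa_pos HH (_ : (q < size s)%N)) H0 G1). lia.
- exfalso. subst q. rewrite (@Vw_single s p) in H0; [|lia].
  apply: (uu_nz HH (_ : (p < size s)%N)); [lia|]. by rewrite H0.
Qed.

Lemma polar_vec (w : R * R) : w <> (0, 0) ->
  exists rho psi, 0 < rho /\ w = (rho * cos psi, rho * sin psi).
Proof.
case: w => x y H.
have Hnz : ~ (x = 0 /\ y = 0) by move=> [h1 h2]; apply H; rewrite h1 h2.
have [t [_ [E1 E2]]] := polar_exists _ _ Hnz.
exists (sqrt (x * x + y * y)), t. split.
- apply sqrt_lt_R0. destruct (Req_dec x 0) as [h|h].
  + have : y <> 0 by move=> h'; apply Hnz. nra.
  + nra.
- by rewrite -E1 -E2.
Qed.

Lemma cross_sin_ge r1 a r2 b : 0 < r1 -> 0 < r2 ->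
  0 <= cross (r1 * cos a, r1 * sin a) (r2 * cos b, r2 * sin b) -> 0 <= sin (b - a).
Proof.
move=> h1 h2. rewrite cross_polar => H.
destruct (Rle_dec 0 (sin (b - a))) as [h|h]; [exact h|].
have : 0 < r1 * r2 * - sin (b - a) by apply Rmult_lt_0_compat; [apply Rmult_lt_0_compat|]; lra.
lra.
Qed.

Lemma cross_sin_lt r1 a r2 b : 0 < r1 -> 0 < r2 -> sin (b - a) < 0 ->
  cross (r1 * cos a, r1 * sin a) (r2 * cos b, r2 * sin b) < 0.
Proof.
move=> h1 h2 H. rewrite cross_polar.
have : 0 < r1 * r2 * - sin (b - a) by apply Rmult_lt_0_compat; [apply Rmult_lt_0_compat|]; lra.
lra.
Qed.

Lemma angle_eq_2pi a b (W : Z) : 0 <= a < 2 * PI -> 0 <= b < 2 * PI ->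
  2 * PI = b - a + 2 * PI * IZR W -> b = a.
Proof.
move=> Ha Hb H. have HP := PI_RGT_0.
destruct (Z_lt_le_dec W 1) as [h|h].
- have : (W <= 0)%Z by lia. move=> /IZR_le h'. nra.
- destruct (Z.eq_dec W 1) as [e|e].
  + subst W. simpl in H. lra.
  + have : (2 <= W)%Z by lia. move=> /IZR_le h'. nra.
Qed.

Lemma same_angle s i j : Hyps s -> (i < size s)%N -> (j < size s)%N ->
  thv s j = thv s i -> exists k, 0 < k /\ uu s j = vsc k (uu s i).
Proof.
move=> HH Hi Hj E.
have [_ [r1 [h1 E1]]] := uu_polar HH Hi. have [_ [r2 [h2 E2]]] := uu_polar HH Hj.
exists (r2 / r1). split; first by apply Rdiv_lt_0_compat.
rewrite E1 E2 E /vsc /=. f_equal; field; lra.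
Qed.

Definition noncol s := exists i j, (i < size s)%N /\ (j < size s)%N /\ cross (uu s i) (uu s j) <> 0.

Lemma main_turn s : Hyps s -> noncol s ->
  forall N len l, (len <= N)%N -> (l + len < size s)%N -> Tn s l len <= 2 * PI.
Proof.
move=> HH Hnc. have HG : Good_list s by case: HH.
have HP := PI_RGT_0.
have Hdl : forall t, (t.+1 < size s)%N -> 0 <= dl s t < PI.
{ move=> t Ht. have h1 := dl_bounds HH Ht. have h2 := dl_lt_pi HH Hnc Ht. lra. }
elim=> [|N IHN] len l Hlen Hk.
{ have -> : len = 0%N by lia. simpl. lra. }
case: (leqP len N) => hlen; first by apply IHN.
have Elen : len = N.+1 by lia. subst len. rename N into m.
destruct (Rle_dec (Tn s l m.+1) (2 * PI)) as [Hok|Hbad]; [exact Hok|exfalso].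
apply Rnot_le_lt in Hbad.
rewrite addnS in Hk.
have E1 : Tn s l m.+1 = dl s l + Tn s l.+1 m by reflexivity.
have E2 := Tn_r s l m.
have Hm : (2 <= m)%N.
{ case: (leqP 2 m) => // hm. exfalso.
  have hl := Hdl l ltac:(lia).
  destruct m as [|[|m']]; [|idtac|lia].
  - simpl in Hbad. lra.
  - have hl1 := Hdl l.+1 ltac:(lia). simpl in Hbad. lra. }
set r := (l + m).+1 in Hk.
have IH1 : Tn s l.+1 m <= 2 * PI by apply IHN; [lia| rewrite /r in Hk; lia].
have IH2 : Tn s l m <= 2 * PI by apply IHN; lia.
have hdl := Hdl l ltac:(lia).
have hdr := Hdl (l + m)%N ltac:(lia).
set H := Vw s l.+1 r.+1. set G := Vw s l r. set I := Vw s l.+1 r.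
have Hpos := proj1 (proj2 HH).
destruct (classic (H = (0, 0))) as [H0|Hn0].
{ have := LZ HH (_ : (l.+1 < r.+1)%N) (_ : (r.+1 <= size s)%N) H0.
  move=> /(_ ltac:(lia) ltac:(lia)) hc.
  have := dl_zero HH (_ : (l.+1 < size s)%N) (proj2 hdl) hc. move=> /(_ ltac:(lia)) h0.
  lra. }
destruct (classic (G = (0, 0))) as [G0|Gn0].
{ have Gr : Vw s l (l + m).+1 = (0, 0) by exact G0.
  have := LZ' HH (_ : (l <= l + m)%N) (_ : ((l + m).+2 <= size s)%N) Gr.
  move=> /(_ ltac:(lia) ltac:(lia)) hc.
  have := dl_zero HH (_ : ((l + m).+1 < size s)%N) (proj2 hdr) hc. move=> /(_ ltac:(lia)) h0.
  lra. }
have Sl := Vw_single (s := s) (l := l) ltac:(lia).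
have Sl1 := Vw_single (s := s) (l := l.+1) ltac:(lia).
have Sr := Vw_single (s := s) (l := r) ltac:(lia).
have Slm := Vw_single (s := s) (l := (l + m)%N) ltac:(lia).
have F1 : 0 <= cross (uu s l.+1) H.
{ have [A [hA E]] := Vw_cons (s := s) (l := l.+1) (r := r.+1) Hpos ltac:(lia) ltac:(lia).
  have G1 := @GoodI s l.+1 l.+2 r.+1 HG ltac:(lia) ltac:(lia) ltac:(lia).
  rewrite Sl1 in G1. rewrite /H E cross_vlin_r cross_self. lra. }
have HrI : H = vlin (aa s r) I (uu s r).
{ rewrite /H /I. apply Vw_rcons; lia. }
have har : 0 < aa s r by apply aa_pos; [exact HH|lia].
have F2 : 0 <= cross H (uu s r).
{ have G1 := @GoodI s l.+1 r r.+1 HG ltac:(lia) ltac:(lia) ltac:(lia).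
  rewrite Sr -/I in G1. rewrite HrI cross_vlin_l cross_self.
  have : 0 <= aa s r * cross I (uu s r) by apply Rmult_le_pos; lra. lra. }
have [AG [hAG EG]] := Vw_cons (s := s) (l := l) (r := r) Hpos ltac:(lia) ltac:(lia).
rewrite -/G -/I in EG.
have F3 : 0 <= cross (uu s l) G.
{ have G1 := @GoodI s l l.+1 r HG ltac:(lia) ltac:(lia) ltac:(lia).
  rewrite Sl -/I in G1. rewrite EG cross_vlin_r cross_self. lra. }
have F4 : 0 <= cross G (uu s (l + m)%N).
{ have G1 := @GoodI s l (l + m)%N r HG ltac:(lia) ltac:(lia) ltac:(lia).
  rewrite /r in G1 *. rewrite Slm in G1.
  have E : G = vlin (aa s (l + m)%N) (Vw s l (l + m)%N) (uu s (l + m)%N).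
  { rewrite /G /r. apply Vw_rcons; lia. }
  rewrite E cross_vlin_l cross_self.
  have ha : 0 < aa s (l + m)%N by apply aa_pos; [exact HH|lia].
  have : 0 <= aa s (l + m)%N * cross (Vw s l (l + m)) (uu s (l + m)) by apply Rmult_le_pos; lra.
  lra. }
have F5 : 0 <= cross (uu s l) H.
{ have G1 := @GoodI s l l.+1 r.+1 HG ltac:(lia) ltac:(lia) ltac:(lia). by rewrite Sl in G1. }
have F6 : 0 <= cross G (uu s r).
{ have G1 := @GoodI s l r r.+1 HG ltac:(lia) ltac:(lia) ltac:(lia). by rewrite Sr in G1. }
have [Bl [rl [hrl Ul]]] := uu_polar HH (ltac:(lia) : (l < size s)%N).
have [Bl1 [rl1 [hrl1 Ul1]]] := uu_polar HH (ltac:(lia) : (l.+1 < size s)%N).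
have [Br [rr [hrr Ur]]] := uu_polar HH (ltac:(lia) : (r < size s)%N).
have [Blm [rlm [hrlm Ulm]]] := uu_polar HH (ltac:(lia) : ((l + m)%N < size s)%N).
have [e1 He1] := step_eq (thv s l) (thv s l.+1).
have [e2 He2] := step_eq (thv s (l + m)%N) (thv s r).
have [W1 HW1] := Tn_eq s l.+1 m.
have [W2 HW2] := Tn_eq s l m.
have Er1 : (l.+1 + m)%N = r by rewrite /r; lia.
rewrite Er1 in HW1.
change (step (thv s l) (thv s l.+1)) with (dl s l) in He1.
change (step (thv s (l + m)%N) (thv s r)) with (dl s (l + m)%N) in He2.
destruct (Rlt_le_dec (Tn s l.+1 m) (2 * PI)) as [hc|hc].
{
  have [rh [psi [hrh EH]]] := polar_vec Hn0.
  have S1 : 0 <= sin (psi - thv s l.+1).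
  { apply: (cross_sin_ge hrl1 hrh). by rewrite -Ul1 -EH. }
  have S2 : 0 <= sin (thv s r - psi).
  { apply: (cross_sin_ge hrh hrr). by rewrite -Ur -EH. }
  have S3 := @arc (thv s l) (thv s l.+1) (thv s r) psi
     (dl s l) (Tn s l.+1 m) (- e1)%Z (- W1)%Z hdl hc
     ltac:(lra) ltac:(rewrite opp_IZR; lra) ltac:(rewrite opp_IZR; lra) S1 S2.
  have := cross_sin_lt hrl hrh S3. rewrite -Ul -EH. lra. }
destruct (Rlt_le_dec (Tn s l m) (2 * PI)) as [hd|hd].
{
  have [rh [psi [hrh EH]]] := polar_vec Gn0.
  have S1 : 0 <= sin (psi - thv s l).
  { apply: (cross_sin_ge hrl hrh). by rewrite -Ul -EH. }
  have S2 : 0 <= sin (thv s (l + m)%N - psi).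
  { apply: (cross_sin_ge hrh hrlm). by rewrite -Ulm -EH. }
  have S1' : 0 <= sin (- thv s l - - psi) by replace (- thv s l - - psi) with (psi - thv s l) by ring.
  have S2' : 0 <= sin (- psi - - thv s (l + m)%N)
    by replace (- psi - - thv s (l + m)%N) with (thv s (l + m)%N - psi) by ring.
  have S3 := @arc (- thv s r) (- thv s (l + m)%N) (- thv s l) (- psi)
     (dl s (l + m)%N) (Tn s l m) (- e2)%Z (- W2)%Z hdr hd
     ltac:(lra) ltac:(rewrite opp_IZR; lra) ltac:(rewrite opp_IZR; lra) S2' S1'.
  replace (- psi - - thv s r) with (thv s r - psi) in S3 by ring.
  have := cross_sin_lt hrh hrr S3. rewrite -Ur -EH. lra. }
have T1 : Tn s l.+1 m = 2 * PI by lra.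
have T2 : Tn s l m = 2 * PI by lra.
have hpos : 0 < dl s l < PI by lra.
have Cp := dl_pos_cross HH (ltac:(lia) : (l.+1 < size s)%N) hpos.
have A1 : thv s r = thv s l.+1.
{ apply: (angle_eq_2pi (W := W1)) => //. lra. }
have A2 : thv s (l + m)%N = thv s l.
{ apply: (angle_eq_2pi (W := W2)) => //. lra. }
have [k1 [hk1 K1]] := same_angle HH (ltac:(lia) : (l.+1 < size s)%N) (ltac:(lia) : (r < size s)%N) A1.
have [k2 [hk2 K2]] := same_angle HH (ltac:(lia) : (l < size s)%N) (ltac:(lia) : ((l + m)%N < size s)%N) A2.
have C1 : cross (uu s l.+1) I = 0.
{ have h1 : cross (uu s l.+1) H <= 0.
  { move: F2. rewrite K1 cross_vsc_r cross_anti => h. nra. }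
  have h2 : cross (uu s l.+1) H = aa s r * cross (uu s l.+1) I.
  { rewrite HrI cross_vlin_r K1 cross_vsc_r cross_self. ring. }
  have : aa s r * cross (uu s l.+1) I = 0 by lra.
  move=> /Rmult_integral [h|h]; [lra|exact h]. }
have C2 : cross (uu s l) I = 0.
{ have h1 : cross (uu s l) G <= 0.
  { move: F4. rewrite K2 cross_vsc_r cross_anti => h. nra. }
  have h2 : cross (uu s l) G = cross (uu s l) I.
  { rewrite EG cross_vlin_r cross_self. ring. }
  lra. }
have I0 : I = (0, 0).
{ apply: (zero_of_two (p := uu s l) (q := uu s l.+1)); [lra|exact C2|exact C1]. }
have := LZ HH (ltac:(lia) : (l.+1 < r)%N) (ltac:(lia) : (r <= size s)%N) I0.
lra.
Qed.

Fixpoint turnL (x : R) (t : seq R) : R :=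
  match t with [::] => 0 | y :: t' => step x y + turnL y t' end.

Fixpoint desc (x : R) (t : seq R) : nat :=
  match t with [::] => 0%N | y :: t' => if Rle_dec x y then desc y t' else (desc y t').+1 end.

Lemma turnL_eq x t : turnL x t = last x t - x + 2 * PI * INR (desc x t).
Proof.
elim: t x => [|y t IH] x /=; first ring.
rewrite IH /step. destruct (Rle_dec x y); cbv beta iota delta [is_left].
- ring.
- rewrite S_INR. ring.
Qed.

Lemma RlebP x y : Rleb x y = true <-> x <= y.
Proof. rewrite /Rleb. destruct (Rle_dec x y); split; intros; try done; lra. Qed.

Lemma desc0 x t : desc x t = 0%N -> path Rleb x t.
Proof.
elim: t x => [|y t IH] x //=. destruct (Rle_dec x y) as [h|h]; simpl; [|lia].
move=> H. apply/andP. split; [by apply/RlebP|by apply IH].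
Qed.

Lemma desc1 x t : desc x t = 1%N ->
  exists t1 y t2, t = t1 ++ y :: t2 /\ path Rleb x t1 /\ path Rleb y t2.
Proof.
elim: t x => [|z t IH] x //=. destruct (Rle_dec x z) as [h|h]; simpl.
- move=> H. have [t1 [y [t2 [E [P1 P2]]]]] := IH z H.
  exists (z :: t1), y, t2. rewrite E. split; [done|split; [|done]].
  simpl. apply/andP. split; [by apply/RlebP|exact P1].
- move=> H. exists [::], z, t. split; [done|split; [done|]]. apply desc0. lia.
Qed.

Lemma cyc_sorted x t : 0 <= last x t -> x < 2 * PI -> turnL x t <= 2 * PI ->
  exists p, sorted Rleb (rot p (x :: t)).
Proof.
move=> H1 H2 H3. rewrite turnL_eq in H3. have HP := PI_RGT_0.
case E: (desc x t) => [|[|d]] in H3.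
- exists 0%N. rewrite rot0 /=. exact: desc0.
- have [t1 [y [t2 [Et [P1 P2]]]]] := desc1 E.
  exists (size (x :: t1)). rewrite Et -cat_cons rot_size_cat.
  rewrite /= cat_path P2 /=. apply/andP. split; last exact P1.
  apply/RlebP. have : last x t = last y t2 by rewrite Et last_cat.
  simpl in H3. lra.
- exfalso. have : 2 <= INR d.+2 by rewrite S_INR S_INR; have := pos_INR d; lra.
  nra.
Qed.

Lemma Tn_turnL s l n : Tn s l n = turnL (thv s l) (map (thv s) (iota l.+1 n)).
Proof. elim: n l => [|n IH] l //=. by rewrite IH. Qed.

Lemma In_mem (T : eqType) (x : T) s : List.In x s -> x \in s.
Proof. elim: s => [|a s IH] //= [->|h]; rewrite inE ?eqxx //. by rewrite IH ?orbT. Qed.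

Lemma mem_In (T : eqType) (x : T) s : x \in s -> List.In x s.
Proof. elim: s => [|a s IH] //=. rewrite inE => /orP [/eqP ->|h]; [by left|right; exact: IH]. Qed.

Lemma last_prop (T : Type) (P : T -> Prop) x t : P x -> (forall y, List.In y t -> P y) -> P (last x t).
Proof.
elim: t x => [|y t IH] x //= Hx Ht. apply IH; [apply Ht; by left|move=> z Hz; apply Ht; by right].
Qed.

Lemma In_map_ex2 (A B : Type) (F : A -> B) (e : seq A) (y : B) :
  List.In y (map F e) -> exists x, List.In x e /\ y = F x.
Proof.
elim: e => [|a e IH] //= [h|h].
- by exists a; split; [left|].
- have [x [h1 h2]] := IH h. exists x. split; [by right|exact h2].
Qed.

Lemma angles_sorted s : Hyps s -> noncol s -> exists p, sorted Rleb (rot p (map th s)).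
Proof.
move=> HH Hnc.
have -> : map th s = map (thv s) (iota 0 (size s)).
{ rewrite -{1}(mkseq_nth d0 s) /mkseq -map_comp. by apply eq_map. }
case Ek: (size s) => [|k]; first by exists 0%N.
have Hb : forall j, (j < size s)%N -> 0 <= thv s j < 2 * PI.
{ move=> j Hj. by have [h _] := uu_polar HH Hj. }
rewrite /= -/(iota 1 k).
apply cyc_sorted.
- apply: (last_prop (P := fun y => 0 <= y)); first by have := Hb 0%N ltac:(lia); lra.
  move=> y Hy. have [j [Hj ->]] := In_map_ex2 Hy.
  have := In_mem Hj. rewrite mem_iota => Hj'.
  have := Hb j ltac:(lia). lra.
- have := Hb 0%N ltac:(lia). lra.
- rewrite -Tn_turnL. apply: (main_turn HH Hnc (N := k)); lia.
Qed.

Lemma In_filter_P (T : Type) (p : pred T) x s : List.In x (filter p s) -> List.In x s /\ p x.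
Proof.
elim: s => [|a s IH] //=. case Ha: (p a) => /=.
- move=> [<-|h]; [by split; [left|]|]. have [h1 h2] := IH h. split; [by right|exact h2].
- move=> h. have [h1 h2] := IH h. split; [by right|exact h2].
Qed.

Lemma In_filter_intro (T : Type) (p : pred T) x s : List.In x s -> p x -> List.In x (filter p s).
Proof.
elim: s => [|a s IH] //= [<-|h] Hp; first by rewrite Hp; left.
case: (p a); [right|]; exact: IH.
Qed.

Lemma In_nth_ex f s : List.In f s -> exists t, (t < size s)%N /\ nth d0 s t = f.
Proof.
elim: s => [|a s IH] //= [<-|h]; first by exists 0%N.
have [t [h1 h2]] := IH h. by exists t.+1.
Qed.

Lemma In_map_intro (A B : Type) (F : A -> B) x e : List.In x e -> List.In (F x) (map F e).
Proof. elim: e => [|a e IH] //= [<-|h]; [by left|right; exact: IH]. Qed.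

Lemma pmap_some (A B : Type) (g : A -> option B) (h : A -> B) e :
  (forall x, List.In x e -> g x = Some (h x)) -> pmap g e = map h e.
Proof.
elim: e => [|a e IH] //= H. rewrite (H a (or_introl erefl)) /=. f_equal.
apply IH => x Hx. apply H. by right.
Qed.

Unset Implicit Arguments.

Theorem mainTheorem8 (n : nat) (fs : 'I_n -> linfun) :
  (forall i : 'I_n, monotone (fs i)) ->
  ~ colinear fs ->
  forall sigma : {perm 'I_n}, locally_optimal fs sigma -> counterclockwise fs sigma.
Proof.
move=> Hmon Hnc sigma Hlo.
set F := fun i => fs (sigma i).
set L := map F (enum 'I_n).
set s := filter nonid L.
have HGL : Good_list L := lo_good _ _ _ Hmon Hlo.
have HGs : Good_list s := Good_filter _ HGL.
have Hpos : allpos s.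
{ move=> f Hf. have [h1 _] := In_filter_P Hf. have [i [_ ->]] := In_map_ex2 h1. apply Hmon. }
have Hnid : forall t, (t < size s)%N -> ~ identical (nth d0 s t).
{ move=> t Ht. have Hall : all nonid s by apply filter_all.
  have := (all_nthP d0 Hall) t Ht. rewrite /nonid => h hid.
  apply identicalbP in hid. by rewrite hid in h. }
have HH : Hyps s by split; [|split].
have Hnc' : noncol s.
{ apply NNPP => Hno. apply Hnc.
  have Z : forall i j, (i < size s)%N -> (j < size s)%N -> cross (uu s i) (uu s j) = 0.
  { move=> i j Hi Hj. apply NNPP => h. apply Hno. by exists i, j. }
  have Hmem : forall i : 'I_n, ~ identical (fs i) -> exists t, (t < size s)%N /\ nth d0 s t = fs i.
  { move=> i Hi. apply In_nth_ex. apply In_filter_intro.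
    - have -> : fs i = F (perm_inv sigma i) by rewrite /F permKV.
      apply In_map_intro. apply mem_In. by rewrite mem_enum.
    - rewrite /nonid. apply/negP => h. apply Hi. by apply identicalbP. }
  have Hcr : forall i j : 'I_n, ~ identical (fs i) -> ~ identical (fs j) ->
      cross (vecf (fs i)) (vecf (fs j)) = 0.
  { move=> i j Hi Hj. have [t1 [h1 e1]] := Hmem i Hi. have [t2 [h2 e2]] := Hmem j Hj.
    have := Z t1 t2 h1 h2. by rewrite /uu e1 e2. }
  destruct (classic (exists i0, ~ identical (fs i0))) as [[i0 Hi0]|Hall].
  - exists (th (fs i0)) => i.
    destruct (classic (identical (fs i))) as [Hi|Hi]; [left; exact: theta_none|right].
    have [E1 [_ [r1 [hr1 V1]]]] := theta_spec _ Hi0.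
    have [E2 [_ [r2 [hr2 V2]]]] := theta_spec _ Hi.
    exists (th (fs i)). split; [exact E2|].
    have := Hcr i0 i Hi0 Hi. rewrite V1 V2 cross_polar => h.
    have hs : sin (th (fs i) - th (fs i0)) = 0.
    { have : r1 * r2 <> 0 by apply Rgt_not_eq; apply Rmult_lt_0_compat.
      move=> hz. apply (Rmult_eq_reg_l (r1 * r2)); [lra|exact hz]. }
    have [z hz] := sin_eq_0_0 _ hs. by exists z.
  - exists 0 => i. left. apply: theta_none. apply NNPP => h. apply Hall. by exists i. }
have [p Hp] := angles_sorted HH Hnc'.
exists p.
have -> : angle_seq fs sigma = map th s.
{ rewrite /angle_seq /s /L filter_map -map_comp.
  have -> : [seq i <- enum 'I_n | ~~ identicalb (fs (sigma i))] =
            [seq i <- enum 'I_n | preim F nonid i] by apply eq_filter.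
  apply pmap_some => i Hi. have [_ hi] := In_filter_P Hi.
  have Hni : ~ identical (F i).
  { move=> h. move: hi. rewrite /= /nonid. by move/identicalbP: h => ->. }
  by have [E _] := theta_spec _ Hni. }
exact Hp.
Qed.
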